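(* If $\mathbb{A}_\Gamma$ is a non-abelian right-angled Artin group (with $\Gamma$ a finite simplicial graph), then $\mathrm{Aut}(\mathbb{A}_\Gamma)$ involves all finite groups.
   Context: $\mathbb{A}_\Gamma$ has the vertices of $\Gamma$ as generators and relations $[u,v]=1$ for each edge. A group $G$ involves all finite groups if every finite group is a quotient of some finite index subgroup of $G$. *)

(* Defs.v *)
From Stdlib Require List.
From HB Require Import structures.
From mathcomp Require Import all_boot all_fingroup.
Set Implicit Arguments. Unset Strict Implicit. Unset Printing Implicit Defensive.

Local Open Scope group_scope.

Definition simple_graph (V : finType) (E : rel V) : Prop :=
  symmetric E /\ irreflexive E.

Definition is_hom (G H : groupType) (f : G -> H) : Prop :=
  forall x y : G, f (x * y) = f x * f y.

(* (A, iota) is the right-angled Artin group A_Gamma of Gamma = (V, E):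
   iota sends the vertices to generators satisfying [iota u, iota v] = 1 for
   each edge, and (A, iota) is universal (initial) among such data, i.e.
   A = < V | [u,v] = 1 for uv in E >. *)
Definition is_RAAG (V : finType) (E : rel V) (A : groupType) (iota : V -> A)
  : Prop :=
  (forall u v, E u v -> iota u * iota v = iota v * iota u) /\
  (forall (K : groupType) (f : V -> K),
     (forall u v, E u v -> f u * f v = f v * f u) ->
     exists phi : A -> K, [/\ is_hom phi, (forall v, phi (iota v) = f v) &
        forall psi : A -> K, is_hom psi -> (forall v, psi (iota v) = f v) ->
          forall x, psi x = phi x]).

Definition abelian_group (A : groupType) : Prop :=
  forall x y : A, x * y = y * x.

Definition is_aut (A : groupType) (f : A -> A) : Prop :=
  is_hom f /\ bijective f.

Definition aut_subgroup (A : groupType) (H : (A -> A) -> Prop) : Prop :=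
  [/\ (forall f, H f -> is_aut f),
      H id,
      (forall f g, H f -> H g -> H (f \o g)) &
      (forall f g, H f -> is_aut g -> (forall x, g (f x) = x) -> H g)].

Definition finite_index_in_aut (A : groupType) (H : (A -> A) -> Prop) : Prop :=
  exists s : seq (A -> A),
    (forall g, List.In g s -> is_aut g) /\
    forall f, is_aut f ->
      exists2 g, List.In g s & exists2 h, H h & forall x, f x = g (h x).

(* Aut(A) involves all finite groups: every finite group G is a quotient of
   some finite-index subgroup H of Aut(A), i.e. there is a surjective
   homomorphism H -> G. *)
Definition aut_involves_all_finite_groups (A : groupType) : Prop :=
  forall (gT : finGroupType) (G : {group gT}),
    exists (H : (A -> A) -> Prop) (phi : (A -> A) -> gT),
      [/\ aut_subgroup H, finite_index_in_aut H,
          (forall f, H f -> phi f \in G),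
          (forall f g, H f -> H g -> phi (f \o g) = phi f * phi g) &
          (forall y, y \in G -> exists2 f, H f & phi f = y)].

(* Main.v *)
Require Import Defs.
From HB Require Import structures.
From mathcomp Require Import all_boot all_fingroup all_solvable.
From Stdlib Require Import ClassicalEpsilon Classical.
From mathcomp Require Import zify.
Set Implicit Arguments. Unset Strict Implicit. Unset Printing Implicit Defensive.

Local Open Scope group_scope.

Lemma hom1 (G H : groupType) (f : G -> H) : is_hom f -> f 1 = 1.
Proof. move=> hf; have h := hf 1 1; rewrite mulg1 in h.
have: (f 1)^-1 * (f 1 * f 1) = 1 by rewrite -h mulVg.
by rewrite mulKg. Qed.

Lemma homV (G H : groupType) (f : G -> H) x : is_hom f -> f x^-1 = (f x)^-1.
Proof. move=> hf; apply: esym; apply: mulg1_eq. by rewrite -(hf x x^-1) mulgV hom1. Qed.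

Lemma hom_comp (G H K : groupType) (f : H -> K) (g : G -> H) :
  is_hom f -> is_hom g -> is_hom (f \o g).
Proof. by move=> hf hg x y /=; rewrite hg (hf (g x) (g y)). Qed.

Lemma conj_hom (G : groupType) (a : G) : is_hom (fun z => a * z * a^-1).
Proof. by move=> x y /=; rewrite !mulgA mulgVK. Qed.

Lemma conj_eq (G : groupType) (a z : G) : a * z * a^-1 = z -> a * z = z * a.
Proof. by move=> h; rewrite -{2}h mulgVK. Qed.

Lemma raag_uniq (V : finType) (E : rel V) (A : groupType) (iota : V -> A) (K : groupType) (p1 p2 : A -> K) :
  @is_RAAG V E A iota -> is_hom p1 -> is_hom p2 ->
  (forall v, p1 (iota v) = p2 (iota v)) -> forall z, p1 z = p2 z.
Proof.
move=> [rel univ] h1 h2 e z.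
have [|phi [_ _ U]] := univ K (fun v => p1 (iota v)).
  by move=> u v /rel uv; rewrite -!h1 uv.
by rewrite (U p1 h1 (fun _ => erefl)) (U p2 h2 (fun v => esym (e v))).
Qed.

Lemma raag_comm (V : finType) (E : rel V) (A : groupType) (iota : V -> A) : @is_RAAG V E A iota ->
  (forall u v, iota u * iota v = iota v * iota u) -> abelian_group A.
Proof.
move=> R hc.
have cen : forall v z, iota v * z = z * iota v.
  move=> v z; apply: conj_eq.
  apply: (raag_uniq R (conj_hom (iota v)) (p2 := id)) => //= w.
  by rewrite hc mulgK.
move=> a b; apply: conj_eq.
apply: (raag_uniq R (conj_hom a) (p2 := id)) => //= w.
by rewrite -cen mulgK.
Qed.

Lemma aut_id (A : groupType) : is_aut (@id A).
Proof. split; first by []. by exists id. Qed.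

Lemma aut_comp (A : groupType) (f g : A -> A) : is_aut f -> is_aut g -> is_aut (f \o g).
Proof. move=> [hf bf] [hg bg]; split; [exact: hom_comp | exact: bij_comp]. Qed.

Lemma aut_inv (A : groupType) (f : A -> A) : is_aut f ->
  exists g, [/\ is_aut g, cancel f g & cancel g f].
Proof.
move=> [hf [g fg gf]]; exists g; split => //; split; last by exists f.
move=> x y; apply: (can_inj fg); by rewrite (hf (g x) (g y)) !gf.
Qed.

Lemma aut_conj (A : groupType) (a : A) : is_aut (fun z => a * z * a^-1).
Proof.
split; first exact: conj_hom.
exists (fun z => a^-1 * z * a^-1^-1) => z; rewrite invgK !mulgA.
  by rewrite mulVg mul1g mulgVK.
by rewrite mulgV mul1g mulgK.
Qed.

Lemma inP (T : eqType) (x : T) s : x \in s -> List.In x s.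
Proof.
elim: s => //= y s IH; rewrite in_cons => /orP [/eqP ->|/IH]; by [left|right].
Qed.

Lemma core (V : finType) (E : rel V) (A : groupType) (iota : V -> A)
  (T gT : finGroupType) (G : {group gT}) (pi : A -> T) (e : gT -> T) :
  is_RAAG E iota -> is_hom pi -> is_hom e -> injective e ->
  (forall s : T, exists x, pi x = s) ->
  (forall s : T, (forall t : T, s * t = t * s) -> s = 1) ->
  exists (H : (A -> A) -> Prop) (phi : (A -> A) -> gT),
      [/\ aut_subgroup H, finite_index_in_aut H,
          (forall f, H f -> phi f \in G),
          (forall f g, H f -> H g -> phi (f \o g) = phi f * phi g) &
          (forall y, y \in G -> exists2 f, H f & phi f = y)].
Proof.
move=> R hpi he einj pisurj cenT.
pose P (al : A -> A) (g : gT) := g \in G /\ exists x, pi x = e g /\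
   forall ph : A -> T, is_hom ph -> forall z, ph (al z) = ph (x * z * x^-1).
pose H al := is_aut al /\ exists g, P al g.
pose phi al := epsilon (inhabits (1 : gT)) (P al).
have phiP : forall al, H al -> P al (phi al).
  by move=> al [_ ex]; apply: epsilon_spec.
have Pwd : forall al g g', P al g -> P al g' -> g = g'.
  move=> al g g' [_ [x [ex hx]]] [_ [x' [ex' hx']]].
  apply: einj; rewrite -ex -ex'.
  have key : forall z, pi x * pi z * (pi x)^-1 = pi x' * pi z * (pi x')^-1.
    move=> z; rewrite -(homV x hpi) -(homV x' hpi) -(hpi x z) -(hpi (x * z) x^-1).
    by rewrite -(hpi x' z) -(hpi (x' * z) x'^-1) -(hx pi hpi z) (hx' pi hpi z).
  have y1 : (pi x')^-1 * pi x = 1.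
    apply: cenT => t; have [z <-] := pisurj t.
    have k' : pi x * pi z = pi x' * pi z * (pi x')^-1 * pi x by rewrite -key mulgVK.
    by rewrite -mulgA k' !mulgA mulVg mul1g.
  by have := mulg1_eq y1; rewrite invgK => ->.
have compP : forall f g a b, is_aut g -> P f a -> P g b -> P (f \o g) (a * b).
  move=> f g a b ag [Ga [x [ex hx]]] [Gb [x' [ex' hx']]].
  have [gi [agi ggi gig]] := aut_inv ag.
  have hg := ag.1.
  pose w := gi x.
  split; first exact: groupM.
  have e1 : pi x = pi (x' * w * x'^-1) by rewrite -(hx' pi hpi w) /w gig.
  exists (x' * w); split.
    rewrite (hpi x' w) (he a b) -ex -ex' e1 (hpi (x' * w) x'^-1) (hpi x' w).
    by rewrite (homV x' hpi) mulgVK.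
  move=> ph hph z /=.
  rewrite (hx ph hph (g z)).
  have -> : x * g z * x^-1 = g (w * z * w^-1).
    by rewrite (hg (w * z) w^-1) (hg w z) (homV w hg) /w gig.
  by rewrite (hx' ph hph) invMg !mulgA.
have Hcomp : forall f g, H f -> H g -> H (f \o g).
  move=> f g [af [a Pa]] [ag [b Pb]]; split; first exact: aut_comp.
  by exists (a * b); apply: compP.
pose hatf (f : {ffun V -> T}) : A -> T :=
  epsilon (inhabits (fun _ : A => (1 : T)))
    (fun p => is_hom p /\ forall v, p (iota v) = f v).
pose sig (al : A -> A) : {ffun ({ffun V -> T} * V) -> T} :=
  [ffun q => hatf q.1 (al (iota q.2))].
have sigP : forall al be, is_hom al -> is_hom be -> sig al = sig be ->
   forall ph : A -> T, is_hom ph -> forall z, ph (al z) = ph (be z).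
  move=> al be hal hbe sab ph hph.
  pose f : {ffun V -> T} := [ffun v => ph (iota v)].
  have [hh hv] : is_hom (hatf f) /\ forall v, hatf f (iota v) = f v.
    apply: (epsilon_spec (inhabits (fun _ : A => (1 : T)))
      (fun p => is_hom p /\ forall v, p (iota v) = f v)).
    case: R => rel univ.
    have [|p [hp pv _]] := univ T f; last by exists p.
    move=> u v /rel uv; rewrite !ffunE -(hph (iota u) (iota v)) uv.
    by rewrite (hph (iota v) (iota u)).
  have eqh : forall z, ph z = hatf f z.
    by apply: (raag_uniq R hph hh) => v; rewrite hv ffunE.
  apply: (raag_uniq R (hom_comp hph hal) (hom_comp hph hbe)) => v /=.
  have := congr1 (fun s : {ffun ({ffun V -> T} * V) -> T} => s (f, v)) sab; rewrite /= !ffunE /= => h.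
  by rewrite !eqh.
pose Q σ (g : A -> A) :=
  is_aut g /\ ((exists g', is_aut g' /\ sig g' = σ) -> sig g = σ).
pose rep σ := epsilon (inhabits (@id A)) (Q σ).
have repP : forall σ, Q σ (rep σ).
  move=> σ; apply: epsilon_spec.
  case: (classic (exists g', is_aut g' /\ sig g' = σ)) => [[g' [ag' sg']]|nex].
    by exists g'; split => // _.
  by exists id; split; [exact: aut_id | move=> /nex].
exists H, phi; split.
- split.
  + by move=> f [].
  + split; first exact: aut_id.
    exists 1; split; first exact: group1.
    exists 1; split; first by rewrite (hom1 hpi) (hom1 he).
    by move=> ph hph z; rewrite invg1 mulg1 mul1g.
  + exact: Hcomp.
  + move=> f g [af [a [Ga [x [ex hx]]]]] ag gf.
    split => //; exists a^-1; split; first by rewrite groupV.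
    exists x^-1; split; first by rewrite (homV x hpi) (homV a he) ex.
    move=> ph hph z.
    have fg : f (g z) = z by apply: (bij_inj ag.2); exact: gf.
    have := hx ph hph (g z); rewrite fg => h.
    rewrite invgK (hph (x^-1 * z) x) (hph x^-1 z) h (hph (x * g z) x^-1).
    by rewrite (hph x (g z)) !(homV x hph) !mulgA mulVg mul1g mulgVK.
- exists (map rep (enum {ffun ({ffun V -> T} * V) -> T})); split.
    by move=> g /List.in_map_iff [σ [<- _]]; exact: (repP σ).1.
  move=> f af.
  have [ar sr] := repP (sig f).
  have sr' := sr (ex_intro _ f (conj af erefl)).
  exists (rep (sig f)).
    by apply: List.in_map; apply: inP; rewrite mem_enum.
  have [gi [agi ggi gig]] := aut_inv ar.
  exists (gi \o f); last by move=> z /=; rewrite gig.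
  split; first exact: aut_comp.
  exists 1; split; first exact: group1.
  exists 1; split; first by rewrite (hom1 hpi) (hom1 he).
  move=> ph hph z /=; rewrite invg1 mulg1 mul1g.
  have := sigP _ _ ar.1 af.1 sr' (ph \o gi) (hom_comp hph agi.1) z.
  by rewrite /= ggi => ->.
- by move=> f /phiP [].
- move=> f g Hf Hg.
  apply: (Pwd (f \o g)); first exact: phiP (Hcomp _ _ Hf Hg).
  by apply: compP; [exact: Hg.1 | exact: phiP | exact: phiP].
- move=> y Gy; have [x ex] := pisurj (e y).
  have Hc : H (fun z => x * z * x^-1).
    split; first exact: aut_conj.
    by exists y; split => //; exists x; split.
  exists (fun z => x * z * x^-1) => //.
  apply: (Pwd _ _ _ (phiP _ Hc)).
  by split => //; exists x; split.
Qed.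

Lemma centerless (X : finType) (s : {perm X}) : 2 < #|X| ->
  (forall t : {perm X}, s * t = t * s) -> s = 1.
Proof.
move=> cX cs; apply/permP => i; rewrite perm1.
apply/eqP; apply/negPn/negP => ne.
have [j /andP [ji jk]] : exists j, (j != i) && (j != s i).
  case: (boolP [exists j, (j != i) && (j != s i)]) => [/existsP //|/existsPn nj].
  exfalso.
  have : [set: X] \subset [set i; s i].
    apply/subsetP => j _; have := nj j; rewrite !inE negb_and !negbK.
    by case/orP => ->; rewrite ?orbT.
  move/subset_leq_card; rewrite cardsT cards2 => le.
  by have := leq_trans cX le; case: (i != s i).
have := cs (tperm i j); move/permP/(_ i); rewrite !permM tpermL tpermD //.
  by move/perm_inj => /eqP; rewrite eq_sym (negbTE ji).
by rewrite eq_sym.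
Qed.

Definition emap (gT : finGroupType) (n : nat) (g : gT) (q : (gT + 'I_n)%type) :
  (gT + 'I_n)%type :=
  match q with inl h => inl (h * g) | inr i => inr i end.

Lemma emapK (gT : finGroupType) (n : nat) (g : gT) : cancel (@emap gT n g) (emap g^-1).
Proof. by case => [h|i] //=; rewrite mulgK. Qed.

Definition eperm (gT : finGroupType) (n : nat) (g : gT) : {perm (gT + 'I_n)%type} :=
  perm (can_inj (@emapK gT n g)).

Lemma eperm_hom (gT : finGroupType) (n : nat) : is_hom (@eperm gT n).
Proof.
move=> a b; apply/permP => q; rewrite permM !permE.
by case: q => [h|i] //=; rewrite mulgA.
Qed.

Lemma eperm_inj (gT : finGroupType) (n : nat) : injective (@eperm gT n).
Proof.
move=> a b /permP /(_ (inl 1)); rewrite !permE /= !mul1g.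
by case.
Qed.

Lemma sym_surj (A : groupType)
  (X : finType) (pi : A -> {perm X}) (a b : A) (t c : {perm X}) :
  is_hom pi -> pi a = t -> pi b = c ->
  <<[set t; c]>> = 'Sym_X -> forall s : {perm X}, exists x, pi x = s.
Proof.
move=> hpi pu pv gen s.
have : s \in <<[set t; c]>> by rewrite gen inE.
case/gen_prodgP => n [cc Hc ->].
elim: n cc Hc => [|n IH] cc Hc.
  by exists 1; rewrite big_ord0 (hom1 hpi).
rewrite big_ord_recl.
have [x1 e1] : exists x, pi x = cc ord0.
  by move: (Hc ord0); rewrite !inE => /orP [/eqP->|/eqP->]; [exists a|exists b].
have [x2 e2] := IH (fun i => cc (lift ord0 i)) (fun i => Hc _).
by exists (x1 * x2); rewrite (hpi x1 x2) e1 e2.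
Qed.

Theorem proposition1p7 (V : finType) (E : rel V) (A : groupType) (iota : V -> A) :
  simple_graph E -> is_RAAG E iota -> ~ abelian_group A ->
  aut_involves_all_finite_groups A.
Proof.
move=> [sym irr] R nab gT G.
have [u [v nuv]] : exists u v, iota u * iota v <> iota v * iota u.
  apply: NNPP => nex; apply: nab; apply: (raag_comm R) => u v.
  apply: NNPP => h; apply: nex; by exists u, v.
have Euv : E u v = false.
  by apply/negP => /(R.1 u v).
have uv : (v == u) = false.
  by apply/negP => /eqP vu; apply: nuv; rewrite vu.
have [p lt_p pr_p] := prime_above (#|gT|.+2).
pose k := (p - #|gT| - 3)%N.
pose X : finType := (gT + 'I_k.+3)%type.
have cardX : #|X| = p.
  rewrite card_sum card_ord /k; move: lt_p; clear; move=> lt_p.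
  move: #|gT| lt_p => n lt_p; lia.
pose x0 : X := inr ord0.
pose y0 : X := inr (lift ord0 ord0).
have xy : x0 != y0 by [].
have pdvd : (p %| #|('Sym_X)%g|)%N.
  by rewrite card_Sym cardX; apply: dvdn_fact; rewrite prime_gt0 ?leqnn.
have [c _ oc] := Cauchy pr_p pdvd.
have gen : <<[set tperm x0 y0; c]>> = 'Sym_X.
  by apply: gen_tperm_circular_shift; rewrite ?cardX.
pose f0 (w : V) : {perm X} := if w == u then tperm x0 y0 else if w == v then c else 1.
have rel0 : forall w w', E w w' -> f0 w * f0 w' = f0 w' * f0 w.
  move=> w w' ew; rewrite /f0; move: ew.
  have [->|Hw] := eqVneq w u; have [->|Hw'] := eqVneq w' u.
  - by [].
  - rewrite ?eqxx ?(negbTE Hw').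
    have [->|Hv'] := eqVneq w' v; first by rewrite Euv.
    by rewrite mulg1 mul1g.
  - rewrite ?eqxx ?(negbTE Hw).
    have [->|Hv] := eqVneq w v; first by rewrite (sym v u) Euv.
    by rewrite mulg1 mul1g.
  - rewrite ?(negbTE Hw) ?(negbTE Hw').
    have [->|Hv] := eqVneq w v; have [->|Hv'] := eqVneq w' v => //.
    all: try (move=> ew; rewrite ?mulg1 ?mul1g //; by rewrite irr in ew).
have [pi [hpi piv _]] := R.2 _ f0 rel0.
have pu : pi (iota u) = tperm x0 y0 by rewrite piv /f0 eqxx.
have pv : pi (iota v) = c by rewrite piv /f0 uv eqxx.
have pisurj := sym_surj hpi pu pv gen.
apply: (core G R hpi (@eperm_hom gT k.+3) (@eperm_inj gT k.+3)).
  exact: pisurj.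
move=> s cs; apply: centerless => //; rewrite cardX.
by move: #|gT| lt_p => n; lia.
Qed.
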